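(* Let $\mathcal{X}$ and $\mathcal{Y}$ be Banach spaces, let $\mathcal{G}, \widetilde{\mathcal{G}}_w \in C^1(\mathcal{X};\mathcal{Y})$, and let $F:\mathcal{Y}\times\mathcal{X}\to\mathbb{R}$ be continuously (Fréchet) differentiable with a Lipschitz continuous derivative. Define $f(a) := F(\mathcal{G}(a),a)$ and $\widetilde{f}_w(a) := F(\widetilde{\mathcal{G}}_w(a),a)$. Let $a^\dagger\in\mathcal{X}$ be a stationary point of $\widetilde{f}_w$, i.e. $D\widetilde{f}_w(a^\dagger)=0$. Then $$\|Df(a^\dagger)\|_{\mathcal{X}'} \le \mathscr{C}\left(\|\mathcal{G}(a^\dagger)\|_{\mathcal{Y}} + \|D\mathcal{G}(a^\dagger)\|_{\mathscr{L}(\mathcal{X},\mathcal{Y})} + \|a^\dagger\|_{\mathcal{X}} + 1\right)\left(\mathscr{E}_0(a^\dagger)+\mathscr{E}_1(a^\dagger)+\mathscr{E}_0(a^\dagger)\mathscr{E}_1(a^\dagger)\right),$$ where $\mathscr{C}>0$ is a constant depending only on $F$, $\mathscr{E}_0(a):=\|\mathcal{G}(a)-\widetilde{\mathcal{G}}_w(a)\|_{\mathcal{Y}}$ and $\mathscr{E}_1(a):=\|D\mathcal{G}(a)-D\widetilde{\mathcal{G}}_w(a)\|_{\mathscr{L}(\mathcal{X},\mathcal{Y})}$.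
   Context: $\mathcal{X}'$ denotes the topological dual of $\mathcal{X}$; $\mathscr{L}(\mathcal{X},\mathcal{Y})$ is the space of bounded linear operators with the operator norm; $D$ denotes the Fréchet derivative. *)

(* Defs.v *)
From HB Require Import structures.
From mathcomp Require Import all_boot all_order all_algebra.
From mathcomp Require Import all_classical all_reals all_analysis.
Set Implicit Arguments. Unset Strict Implicit. Unset Printing Implicit Defensive.
Import Order.TTheory GRing.Theory Num.Theory.
Import numFieldNormedType.Exports.
Local Open Scope classical_set_scope.
Local Open Scope ring_scope.

Definition opnorm {R : realType} {V W : normedModType R} (L : V -> W) : R :=
  sup [set `|L x| | x in [set x : V | `|x| <= 1]].

Definition C1 {R : realType} {V W : normedModType R} (G : V -> W) : Prop :=
  (forall x, differentiable G x) /\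
  (forall x (e : R), 0 < e -> exists2 d : R, 0 < d &
     forall y, `|y - x| < d -> opnorm (fun v => 'd G y v - 'd G x v) < e).

Definition C1_lipschitz_deriv {R : realType} {V W : normedModType R} (F : V -> W) : Prop :=
  C1 F /\ exists L : R, forall p q,
     opnorm (fun v => 'd F p v - 'd F q v) <= L * `|p - q|.

(* Main.v *)
Require Import Defs.
From HB Require Import structures.
From mathcomp Require Import all_boot all_order all_algebra.
From mathcomp Require Import all_classical all_reals all_analysis.
From mathcomp Require Import ring lra.
Import Order.TTheory GRing.Theory Num.Theory.
Import numFieldNormedType.Exports.
Local Open Scope classical_set_scope.
Local Open Scope ring_scope.
Set Implicit Arguments. Unset Strict Implicit.

Section Op.
Context {R : realType} {V W : normedModType R}.

Lemma opnorm_le (L : V -> W) (M : R) : 0 <= M ->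
  (forall x, `|L x| <= M * `|x|) -> opnorm L <= M.
Proof.
move=> M0 HM; apply: ge_sup; first by exists `|L 0|, 0 => //=; rewrite normr0.
move=> _ [x /= x1 <-]; apply: (le_trans (HM x)).
by rewrite -[leRHS]mulr1 ler_wpM2l.
Qed.

Lemma opnorm_bound (L : V -> W) :
  (forall (c : R) x, L (c *: x) = c *: L x) ->
  (exists k, forall x, `|L x| <= k * `|x|) ->
  (0 <= opnorm L) /\ forall x, `|L x| <= opnorm L * `|x|.
Proof.
move=> Lz [k Hk].
have L0 : L 0 = 0 by rewrite -(scale0r (0 : V)) Lz scale0r.
have hs : has_sup [set `|L x| | x in [set x : V | `|x| <= 1]].
  split; first by exists `|L 0|, 0 => //=; rewrite normr0.
  exists `|k| => _ [x /= x1 <-].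
  apply: (le_trans (Hk x)).
  apply: (le_trans (ler_wpM2r (normr_ge0 x) (ler_norm k))).
  by rewrite -[leRHS]mulr1 ler_wpM2l.
have ub := sup_upper_bound hs.
have op0 : 0 <= opnorm L.
  by apply: ub; exists 0 => /=; rewrite ?normr0 ?L0 ?normr0.
split => // x.
have [->|x0] := eqVneq x 0; first by rewrite L0 !normr0 mulr0.
have nx : 0 < `|x| by rewrite normr_gt0.
have : `|L (`|x|^-1 *: x)| <= opnorm L.
  apply: ub; exists (`|x|^-1 *: x) => //=.
  by rewrite normrZ normfV normr_id mulVf // gt_eqF.
rewrite Lz normrZ normfV normr_id -ler_pdivlMl ?invr_gt0 // invrK.
by rewrite mulrC.
Qed.
End Op.

Lemma dbound {R : realType} {U W : normedModType R} (f : U -> W) x :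
  differentiable f x ->
  0 <= opnorm ('d f x) /\ forall v, `|'d f x v| <= opnorm ('d f x) * `|v|.
Proof.
move=> df; apply: (@opnorm_bound R U W ('d f x)); first by move=> c y; rewrite linearZ.
have [k _ hk] := linear_lipschitz (diff_continuous df); by exists k.
Qed.

Lemma dbound2 {R : realType} {U W : normedModType R} (f g : U -> W) x y :
  differentiable f x -> differentiable g y ->
  let D := fun v => 'd f x v - 'd g y v in
  0 <= opnorm D /\ forall v, `|D v| <= opnorm D * `|v|.
Proof.
move=> df dg D; apply: opnorm_bound.
  by move=> c z; rewrite /D scalerBr !linearZZ.
have [k _ hk] := linear_lipschitz (diff_continuous df).
have [k' _ hk'] := linear_lipschitz (diff_continuous dg).
exists (k + k') => v; rewrite /D mulrDl.
by rewrite (le_trans (ler_normB _ _)) // lerD.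
Qed.

Lemma chain {R : realType} {X Y : normedModType R} (F : (Y * X)%type -> R)
  (G : X -> Y) a :
  (forall p, differentiable F p) -> differentiable G a ->
  forall v, 'd (fun b => F (G b, b)) a v = 'd F (G a, a) ('d G a v, v).
Proof.
move=> dF dG v.
have dp : differentiable (fun b => (G b, id b)) a.
  by apply: differentiable_pair => //.
rewrite (_ : (fun b => F (G b, b)) = F \o (fun b => (G b, id b))) //.
rewrite diff_comp // /= diff_pair //=.
by rewrite (@diff_val _ _ _ _ _ _ _ (is_diff_id a)).
Qed.

Lemma poly_bound {R : realType} (l g x e0 e1 n k : R) :
  0 <= l -> 0 <= g -> 0 <= x -> 0 <= e0 -> 0 <= e1 -> 0 <= n -> 0 <= k ->
  l * e0 * (n + 1) + (k + l * (g + e0 + x)) * e1 <=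
  (l + k + 1) * (g + n + x + 1) * (e0 + e1 + e0 * e1).
Proof.
move=> l0 g0 x0 e00 e10 n0 k0.
set S := g + n + x + 1. set C := l + k + 1.
have S1 : 1 <= S by rewrite /S; lra.
have h1 : l * (n + 1) <= C * S.
  apply: ler_pM; rewrite /C /S; lra.
have h2 : k + l * (g + x) <= C * S.
  rewrite /C /S; nra.
have h3 : l <= C * S.
  rewrite -[l]mulr1; apply: ler_pM; rewrite /C /S; lra.
have -> : l * e0 * (n + 1) + (k + l * (g + e0 + x)) * e1 =
   (l * (n + 1)) * e0 + (k + l * (g + x)) * e1 + l * (e0 * e1) by ring.
rewrite (mulrDr (C * S)) (mulrDr (C * S)); apply: lerD; first apply: lerD.
- by apply: ler_wpM2r.
- by apply: ler_wpM2r.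
- by apply: ler_wpM2r => //; apply: mulr_ge0.
Qed.

Theorem proposition1 (R : realType) (X Y : completeNormedModType R)
  (F : (Y * X)%type -> R) :
  C1_lipschitz_deriv F ->
  exists2 C : R, 0 < C &
    forall (G Gw : X -> Y) (a : X),
      C1 G -> C1 Gw ->
      (forall v, 'd (fun b => F (Gw b, b)) a v = 0) ->
      let E0 := `|G a - Gw a| in
      let E1 := opnorm (fun v => 'd G a v - 'd Gw a v) in
      opnorm ('d (fun b => F (G b, b)) a)
        <= C * (`|G a| + opnorm ('d G a) + `|a| + 1) * (E0 + E1 + E0 * E1).
Proof.
move=> [[dF _] [L HL]].
have [K00 K0b] := dbound (dF 0).
set K0 := opnorm ('d F 0) in K00 K0b.
exists (`|L| + K0 + 1).
  by rewrite ltr_wpDl // addr_ge0.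
move=> G Gw a [dG _] [dGw _] H0; cbv zeta.
set E0 := `|G a - Gw a|. set E1 := opnorm (fun v => 'd G a v - 'd Gw a v).
have [N0 Nb] := dbound (dG a).
set N := opnorm ('d G a) in N0 Nb.
have [E10 E1b] := dbound2 (dG a) (dGw a).
have E00 : 0 <= E0 by exact: normr_ge0.
simpl in E10, E1b. rewrite -/E1 in E10 E1b.
have HLp : forall p q, opnorm (fun v => 'd F p v - 'd F q v) <= `|L| * `|p - q|.
  move=> p q; apply: (le_trans (HL p q)); apply: ler_wpM2r => //; exact: ler_norm.
set p := (G a, a). set q := (Gw a, a).
have Hpq : `|p - q| = E0.
  rewrite prod_normE /= subrr normr0; exact: max_l.
have Hq : `|q| <= `|G a| + E0 + `|a|.
  rewrite prod_normE ge_max /=; apply/andP; split; last first.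
    by rewrite lerDr; exact: addr_ge0 (normr_ge0 _) E00.
  apply: (@le_trans _ _ (`|G a| + E0)); last by rewrite lerDl.
  rewrite -[X in `|X| <= _](subrK (G a)) addrC.
  rewrite (le_trans (ler_normD _ _)) // lerD2l /E0 distrC.
  by rewrite -normrN opprB.
set Bk := `|L| * E0 * (N + 1) + (K0 + `|L| * (`|G a| + E0 + `|a|)) * E1.
have key : forall v, `|'d (fun b => F (G b, b)) a v| <= Bk * `|v|.
  move=> v; rewrite chain //.
  have h0 := H0 v; rewrite chain // in h0.
  set u := ('d G a v, v). set uw := ('d Gw a v, v).
  set w := ('d G a v - 'd Gw a v, v - v).
  rewrite -/p. rewrite -/q in h0.
  have h0' : 'd F q uw = 0 := h0.
  have ew0 : w = u - uw by [].
  have hu : `|u| <= (N + 1) * `|v|.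
    rewrite prod_normE ge_max /=; apply/andP; split.
      apply: (le_trans (Nb v)); apply: ler_wpM2r; first exact: normr_ge0.
      by rewrite lerDl.
    rewrite -[X in X <= _]mul1r; apply: ler_wpM2r; first exact: normr_ge0.
    by rewrite lerDr.
  have hw : `|w| <= E1 * `|v|.
    rewrite prod_normE ge_max /=; apply/andP; split.
      have := E1b v; move=> h; apply: h.
    rewrite subrr normr0; apply: mulr_ge0; [exact: E10|exact: normr_ge0].
  clear h0; clearbody u uw w.
  have ew : 'd F q w = 'd F q u.
    rewrite ew0 linearB h0'. apply: subr0.
  have e : 'd F p u = ('d F p u - 'd F q u) + 'd F q w.
    rewrite ew. apply/esym/subrK.
  have [D0 Db] := dbound2 (dF p) (dF q).
  have [D0' Db'] := dbound2 (dF q) (dF 0).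
  simpl in Db, Db', D0, D0'.
  have t1 : `|'d F p u - 'd F q u| <= `|L| * E0 * ((N + 1) * `|v|).
    have h1 := Db u. have h2 := HLp p q. rewrite Hpq in h2.
    apply: (le_trans h1); apply: ler_pM; [exact: D0|exact: normr_ge0|exact: h2|exact: hu].
  have t2 : `|'d F q w| <= (K0 + `|L| * (`|G a| + E0 + `|a|)) * (E1 * `|v|).
    have h3 := Db' w. have h4 := HLp q 0. rewrite subr0 in h4.
    have eq : 'd F q w = ('d F q w - 'd F 0 w) + 'd F 0 w by apply/esym/subrK.
    have h5 : `|'d F q w| <= (opnorm (fun v => 'd F q v - 'd F 0 v) + K0) * `|w|.
      rewrite eq; apply: (le_trans (ler_normD _ _)); rewrite mulrDl.
      apply: lerD; [exact: h3|exact: K0b w].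
    apply: (le_trans h5); rewrite addrC; apply: ler_pM.
    - apply: addr_ge0; [exact: K00|exact: D0'].
    - exact: normr_ge0.
    - rewrite lerD2l; apply: (le_trans h4); apply: ler_wpM2l; [exact: normr_ge0|exact: Hq].
    - exact: hw.
  rewrite e; apply: (le_trans (ler_normD _ _)).
  apply: (le_trans (lerD t1 t2)).
  rewrite /Bk le_eqVlt; apply/orP; left; apply/eqP. ring.
have l0 : 0 <= `|L| by exact: normr_ge0.
have g0 : 0 <= `|G a| by exact: normr_ge0.
have x0 : 0 <= `|a| by exact: normr_ge0.
have hB := poly_bound l0 g0 x0 E00 E10 N0 K00.
apply: opnorm_le.
  apply: mulr_ge0; first apply: mulr_ge0.
  - apply: addr_ge0; [apply: addr_ge0; [exact: l0|exact: K00]|exact: ler01].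
  - apply: addr_ge0; [|exact: ler01].
    apply: addr_ge0; [apply: addr_ge0; [exact: g0|exact: N0]|exact: x0].
  - apply: addr_ge0; [apply: addr_ge0; [exact: E00|exact: E10]|apply: mulr_ge0; [exact: E00|exact: E10]].
move=> v; apply: (le_trans (key v)); apply: ler_wpM2r; first exact: normr_ge0.
exact: hB.
Qed.
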